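(* Let $n\ge2$, $\mathbf i\in\Sigma_n$, $0\le s\le n(n-1)/2$ and $\bullet\in\{D,A\}$. Then there is a canonical injective map $\Psi_\bullet(\mathbf i,s):\mathcal{GP}(\mathbf i)\hookrightarrow\mathcal{GP}(E_\bullet(s)(\mathbf i))$ whose image is exactly the set of rigorous paths $P$ of $G(E_\bullet(s)(\mathbf i))$ such that $P$ does not switch wires at any node lying on $\ell_\bullet$, where $\ell_D:=\ell_{n+1}$ and $\ell_A:=\ell_1$ (wires of $G(E_\bullet(s)(\mathbf i))$). In particular $|\mathcal{GP}(E_\bullet(s)(\mathbf i))|$ equals $|\mathcal{GP}(\mathbf i)|$ plus the number of rigorous paths of $E_\bullet(s)(\mathbf i)$ that switch wires at some node of $\ell_\bullet$.
   Context: $\Sigma_{m+1}$: reduced words of the longest element of $\mathfrak S_{m+1}$ in $s_i=(i,i+1)$, of length $m(m+1)/2$. Extensions: for $\mathbf i=(i_1,\dots,i_M)\in\Sigma_n$ ($M=n(n-1)/2$) and $0\le s\le M$, let $\mathbf i^-(s)=(i_1,\dots,i_{M-s})$, $\mathbf i^+(s)=(i_{M-s+1},\dots,i_M)$; for a word $\mathbf w$, $\mathbf w+1$ adds $1$ to every letter. $E_D(s)(\mathbf i):=\mathbf i^-(s)\,(n,n-1,\dots,1)\,(\mathbf i^+(s)+1)\in\Sigma_{n+1}$ and $E_A(s)(\mathbf i):=(\mathbf i^-(s)+1)\,(1,2,\dots,n)\,\mathbf i^+(s)\in\Sigma_{n+1}$ (concatenations). Wiring diagram $G(\mathbf j)$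 for $\mathbf j\in\Sigma_{m+1}$: $m+1$ wires $\ell_1,\dots,\ell_{m+1}$ run top to bottom through positions $1,\dots,m+1$; at the top $\ell_k$ is in position $k$; the $j$-th node swaps the wires in positions $j_j, j_j+1$; at the bottom $\ell_k$ is in position $m+2-k$ and ends at $L_k$. Rigorous paths: for $k\in[m]$, $G(\mathbf j,k)$ has $\ell_1,\dots,\ell_k$ oriented upward and the rest downward. A rigorous path in $G(\mathbf j,k)$ starts at $L_k$, ends at $L_{k+1}$, moves along wires in their orientation, switches wires only at their crossing node, passes each node at most once, and never passes straight through $\ell_a\cap\ell_b$ while on $\ell_a$ when both are downward with $a>b$ or both upward with $a<b$. $\mathcal{GP}(\mathbf j)$ = set of all rigorous paths (all $k$). *)

(* Defs.v *)
From mathcomp Require Import all_boot.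
Set Implicit Arguments. Unset Strict Implicit. Unset Printing Implicit Defensive.

(* Positions and wires are 1-indexed; nodes of a word j are indexed 0 .. size j - 1
   from top to bottom; the node t is the (t+1)-st letter j_t = nth 0 j t. *)

Definition sw (a p : nat) : nat := if p == a then a.+1 else if p == a.+1 then a else p.

(* position of wire l_w just before node t (wire l_w starts at top position w) *)
Definition pos (j : seq nat) (t w : nat) : nat := foldl (fun p a => sw a p) w (take t j).

(* the wire occupying position p just before node t *)
Definition wire_at (j : seq nat) (t p : nat) : nat := foldr (fun a q => sw a q) p (take t j).

Definition nodeL (j : seq nat) (t : nat) : nat := wire_at j t (nth 0 j t).
Definition nodeR (j : seq nat) (t : nat) : nat := wire_at j t (nth 0 j t).+1.
Definition on_node (j : seq nat) (t w : nat) : bool := (w == nodeL j t) || (w == nodeR j t).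
Definition other (j : seq nat) (t w : nat) : nat := if w == nodeL j t then nodeR j t else nodeL j t.

(* Sigma nw j : j is a reduced word of the longest element of S_nw (nw wires):
   letters in [1, nw-1], length nw(nw-1)/2, and the product of the s_{j_t} is w0,
   i.e. wire l_k ends at position nw+1-k for every k. *)
Definition Sigma (nw : nat) (j : seq nat) : bool :=
  [&& size j == (nw * nw.-1) %/ 2,
      all (fun a => 0 < a < nw) j
    & all (fun k => pos j (size j) k == nw.+1 - k) (iota 1 nw)].

Definition wire_nodes (j : seq nat) (w : nat) : seq nat :=
  [seq t <- iota 0 (size j) | on_node j t w].

Definition upward (k w : nat) : bool := w <= k.

Definition next_node (j : seq nat) (k w t : nat) : option nat :=
  if upward k w then ohead (rev [seq u <- wire_nodes j w | u < t])
  else ohead [seq u <- wire_nodes j w | t < u].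

Definition bottom_node (j : seq nat) (w : nat) : option nat :=
  ohead (rev (wire_nodes j w)).

(* A path datum (k, ws, ts): ts = [t_1; ...; t_r] are the nodes passed (in order),
   ws = [w_0; ...; w_r] where w_0 is the wire on which the path starts at L_k,
   and w_i is the wire on which the path leaves node t_i. *)
Definition path_data := (nat * seq nat * seq nat)%type.

Definition pk (P : path_data) : nat := P.1.1.
Definition pws (P : path_data) : seq nat := P.1.2.
Definition pts (P : path_data) : seq nat := P.2.

Definition straight_ok (j : seq nat) (k a t : nat) : bool :=
  let b := other j t a in
  ~~ ((~~ upward k a && ~~ upward k b && (b < a)) || (upward k a && upward k b && (a < b))).

Definition rigorous (nw : nat) (j : seq nat) (P : path_data) : bool :=
  let k := pk P in let ws := pws P in let ts := pts P in
  let r := size ts in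
  [&& 0 < k < nw,
      size ws == r.+1,
      0 < r,
      head 0 ws == k,
      last 0 ws == k.+1,
      bottom_node j k == Some (head 0 ts),
      uniq ts,
      all (fun i =>
             let t := nth 0 ts i in
             let win := nth 0 ws i in
             let wout := nth 0 ws i.+1 in
             [&& on_node j t win, on_node j t wout &
                 (win == wout) ==> straight_ok j k win t]) (iota 0 r),
      all (fun i => next_node j k (nth 0 ws i.+1) (nth 0 ts i) == Some (nth 0 ts i.+1))
          (iota 0 r.-1)
    & next_node j k (last 0 ws) (last 0 ts) == None].

Definition GP (nw : nat) (j : seq nat) := {P : path_data | rigorous nw j P}.

Definition switches_on (j : seq nat) (e : nat) (P : path_data) : bool :=
  has (fun i => (nth 0 (pws P) i != nth 0 (pws P) i.+1) && on_node j (nth 0 (pts P) i) e)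
      (iota 0 (size (pts P))).

Inductive bullet := BD | BA.

Definition ext (b : bullet) (n s : nat) (i : seq nat) : seq nat :=
  let M := size i in
  match b with
  | BD => take (M - s) i ++ rev (iota 1 n) ++ map S (drop (M - s) i)
  | BA => map S (take (M - s) i) ++ iota 1 n ++ drop (M - s) i
  end.

Definition ell (b : bullet) (n : nat) : nat := match b with BD => n.+1 | BA => 1 end.

(* Main.v *)
Require Import Defs.
From mathcomp Require Import all_boot zify.
Set Implicit Arguments. Unset Strict Implicit. Unset Printing Implicit Defensive.

Definition nextUp (l : seq nat) x := ohead (rev [seq u <- l | u < x]).
Definition nextDn (l : seq nat) x := ohead [seq u <- l | x < u].

Variant up_spec (l : seq nat) (x : nat) : option nat -> Prop :=
| UpNone : (forall y, y \in l -> x <= y) -> up_spec l x None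
| UpSome z : z \in l -> z < x -> (forall y, y \in l -> y < x -> y <= z) -> up_spec l x (Some z).
Variant dn_spec (l : seq nat) (x : nat) : option nat -> Prop :=
| DnNone : (forall y, y \in l -> y <= x) -> dn_spec l x None
| DnSome z : z \in l -> x < z -> (forall y, y \in l -> x < y -> z <= y) -> dn_spec l x (Some z).

Lemma nextUpP l x : sorted ltn l -> up_spec l x (nextUp l x).
Proof.
move=> so; rewrite /nextUp.
have sr : sorted (fun a b => b < a) (rev [seq u <- l | u < x]).
  by rewrite rev_sorted; apply: sorted_filter => //; exact: ltn_trans.
case E: (rev _) sr => [|z s] /= sr.
  constructor=> y yl; rewrite leqNgt; apply/negP => yx.
  have : y \in rev [seq u <- l | u < x] by rewrite mem_rev mem_filter yx.
  by rewrite E.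
have zin : z \in [seq u <- l | u < x] by rewrite -mem_rev E mem_head.
rewrite mem_filter in zin; case/andP: zin => zx zl.
constructor => // y yl yx.
have : y \in rev [seq u <- l | u < x] by rewrite mem_rev mem_filter yx.
rewrite E inE => /orP [/eqP -> //|ys].
have tr : transitive (fun a b : nat => b < a) by move=> a b c h1 h2; exact: ltn_trans h2 h1.
by have := allP (order_path_min tr sr) y ys => /ltnW.
Qed.

Lemma nextDnP l x : sorted ltn l -> dn_spec l x (nextDn l x).
Proof.
move=> so; rewrite /nextDn.
have sr : sorted ltn [seq u <- l | x < u].
  by apply: sorted_filter => //; exact: ltn_trans.
case E: [seq u <- l | x < u] sr => [|z s] /= sr.
  constructor=> y yl; rewrite leqNgt; apply/negP => yx.
  have : y \in [seq u <- l | x < u] by rewrite mem_filter yx.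
  by rewrite E.
have zin : z \in [seq u <- l | x < u] by rewrite E mem_head.
rewrite mem_filter in zin; case/andP: zin => zx zl.
constructor => // y yl yx.
have : y \in [seq u <- l | x < u] by rewrite mem_filter yx.
rewrite E inE => /orP [/eqP -> //|ys].
have := (allP (order_path_min ltn_trans sr)) y ys.
by move=> /ltnW.
Qed.

Lemma up_uniq l x o1 o2 : up_spec l x o1 -> up_spec l x o2 -> o1 = o2.
Proof.
case=> [H1|z1 i1 l1 m1]; case=> [H2|z2 i2 l2 m2] //.
- by have := H1 _ i2; rewrite leqNgt l2.
- by have := H2 _ i1; rewrite leqNgt l1.
- by have := m1 _ i2 l2; have := m2 _ i1 l1 => a b; congr Some; apply/eqP; rewrite eqn_leq a b.
Qed.

Lemma dn_uniq l x o1 o2 : dn_spec l x o1 -> dn_spec l x o2 -> o1 = o2.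
Proof.
case=> [H1|z1 i1 l1 m1]; case=> [H2|z2 i2 l2 m2] //.
- by have := H1 _ i2; rewrite leqNgt l2.
- by have := H2 _ i1; rewrite leqNgt l1.
- by have := m1 _ i2 l2; have := m2 _ i1 l1 => a b; congr Some; apply/eqP; rewrite eqn_leq a b.
Qed.

Inductive reach (nx : nat -> option nat) (X : pred nat) : option nat -> option nat -> Prop :=
| R_none : reach nx X None None
| R_good z : ~~ X z -> reach nx X (Some z) (Some z)
| R_bad z o : X z -> reach nx X (nx z) o -> reach nx X (Some z) o.

Lemma reach_up l X x : sorted ltn l ->
  reach (nextUp l) X (nextUp l x) (nextUp [seq u <- l | ~~ X u] x).
Proof.
move=> so; have sf : sorted ltn [seq u <- l | ~~ X u] by apply: sorted_filter => //; exact: ltn_trans.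
elim/ltn_ind: x => x IH.
case: (nextUpP x so) => [H|z zl zx zm].
  have -> : nextUp [seq u <- l | ~~ X u] x = None.
    apply: up_uniq (nextUpP x sf) _; constructor => y; rewrite mem_filter => /andP[_]; exact: H.
  constructor.
case Xz: (X z).
  apply: R_bad => //.
  have -> : nextUp [seq u <- l | ~~ X u] x = nextUp [seq u <- l | ~~ X u] z; last exact: IH.
  apply: up_uniq (nextUpP z sf); case: (nextUpP x sf) => [H|z' z'l z'x z'm].
    by constructor => y yl; have := H _ yl; apply: leq_trans; exact: ltnW.
  move: (z'l); rewrite mem_filter => /andP [nX z'l'].
  have z'z : z' < z.
    rewrite ltn_neqAle zm // andbT; apply/eqP => e; by rewrite e Xz in nX.
  constructor => // y yl yz; apply: z'm => //; exact: ltn_trans yz zx.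
have -> : nextUp [seq u <- l | ~~ X u] x = Some z; last by constructor; rewrite Xz.
apply: up_uniq (nextUpP x sf) _; constructor => //.
  by rewrite mem_filter Xz.
by move=> y; rewrite mem_filter => /andP [_ yl]; exact: zm.
Qed.

Lemma sumn_ge l y : y \in l -> y <= sumn l.
Proof. elim: l => //= a l IH; rewrite inE => /orP [/eqP ->|/IH]; lia. Qed.

Lemma reach_dn l X x : sorted ltn l ->
  reach (nextDn l) X (nextDn l x) (nextDn [seq u <- l | ~~ X u] x).
Proof.
move=> so; have sf : sorted ltn [seq u <- l | ~~ X u] by apply: sorted_filter => //; exact: ltn_trans.
move: {2}(sumn l - x).+1 (ltnSn (sumn l - x)) => m; elim: m x => // m IH x Hm.
case: (nextDnP x so) => [H|z zl zx zm].
  have -> : nextDn [seq u <- l | ~~ X u] x = None.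
    apply: dn_uniq (nextDnP x sf) _; constructor => y; rewrite mem_filter => /andP[_]; exact: H.
  constructor.
case Xz: (X z).
  apply: R_bad => //.
  have -> : nextDn [seq u <- l | ~~ X u] x = nextDn [seq u <- l | ~~ X u] z.
    apply: dn_uniq (nextDnP z sf); case: (nextDnP x sf) => [H|z' z'l z'x z'm].
      by constructor => y yl; have := H _ yl => h; apply: leq_trans h (ltnW zx).
    move: (z'l); rewrite mem_filter => /andP [nX z'l'].
    have z'z : z < z'.
      rewrite ltn_neqAle zm // andbT; apply/eqP => e; by rewrite -e Xz in nX.
    constructor => // y yl yz; apply: z'm => //; exact: ltn_trans zx yz.
  apply: IH; have := sumn_ge zl; lia.
have -> : nextDn [seq u <- l | ~~ X u] x = Some z; last by constructor; rewrite Xz.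
apply: dn_uniq (nextDnP x sf) _; constructor => //.
  by rewrite mem_filter Xz.
by move=> y; rewrite mem_filter => /andP [_ yl]; exact: zm.
Qed.

Definition step_ok j k t win wout :=
  [&& on_node j t win, on_node j t wout & (win == wout) ==> straight_ok j k win t].

Fixpoint walk (j : seq nat) (k t win : nat) (ws ts : seq nat) {struct ws} : bool :=
  match ws with
  | [::] => false
  | wout :: ws' => step_ok j k t win wout &&
     match next_node j k wout t with
     | None => (ws' == [::]) && (ts == [::]) && (wout == k.+1)
     | Some t' => match ts with [::] => false | t'' :: ts' => (t'' == t') && walk j k t' wout ws' ts' end
     end
  end.

Definition cont j k (o : option nat) w ws ts :=
  match o with
  | None => (ws == [::]) && (ts == [::]) && (w == k.+1)
  | Some t' => match ts with [::] => false | t'' :: ts' => (t'' == t') && walk j k t' w ws ts' end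
  end.

Lemma walk_cons j k t win wout ws ts :
  walk j k t win (wout :: ws) ts = step_ok j k t win wout && cont j k (next_node j k wout t) wout ws ts.
Proof. by []. Qed.

Lemma all_iotaS (P : pred nat) m : all P (iota 0 m.+1) = P 0 && all (fun i => P i.+1) (iota 0 m).
Proof.
rewrite /=; congr (_ && _); have -> : iota 1 m = map (addn 1) (iota 0 m) by rewrite -iotaDl.
by rewrite all_map; apply: eq_all => i /=; rewrite add1n.
Qed.

Lemma cont_some j k t' w ws t1 ts : cont j k (Some t') w ws (t1 :: ts) = (t1 == t') && walk j k t' w ws ts.
Proof. by []. Qed.

Lemma walk_nth j k t w ws ts :
  walk j k t w ws ts = [&& size ws == (size ts).+1,
    all (fun i => step_ok j k (nth 0 (t::ts) i) (nth 0 (w::ws) i) (nth 0 (w::ws) i.+1)) (iota 0 (size ts).+1),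
    all (fun i => next_node j k (nth 0 (w::ws) i.+1) (nth 0 (t::ts) i) == Some (nth 0 (t::ts) i.+1)) (iota 0 (size ts)),
    next_node j k (last w ws) (last t ts) == None & last w ws == k.+1].
Proof.
elim: ws t w ts => [|wout ws IH] t w ts.
  by [].
rewrite walk_cons.
case: ts => [|t1 ts].
  rewrite all_iotaS /=; case N: (next_node j k wout t) => [t'|] /=.
    by case: ws {IH} => [|w2 ws] /=; rewrite ?N ?andbF.
  by case: ws {IH} => [|w2 ws] /=; rewrite ?N ?andbF ?andbT.
case N: (next_node j k wout t) => [t'|]; last first.
  by rewrite [size _]/= !all_iotaS /= N !andbF.
rewrite cont_some IH [size _]/= !all_iotaS /= N.
rewrite (_ : (Some t' == Some t1) = (t1 == t')); last by apply/eqP/eqP=>[[->]|->].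
case: eqP => [->|]; rewrite ?andbF //= eqSS.
case: (step_ok j k t w wout) => //=.
by rewrite andbF.
Qed.
Lemma rigE nw j k ws ts :
  rigorous nw j (k, ws, ts) =
  [&& 0 < k < nw, uniq ts, head 0 ws == k & cont j k (bottom_node j k) (head 0 ws) (behead ws) ts].
Proof.
rewrite /rigorous /pk /pws /pts /=.
case: ws => [|w0 wo] /=.
  by case: (bottom_node _ _) => [b|] /=; case: ts => [|t ts] //=; rewrite !andbF.
case: ts => [|t0 ts] /=.
  case: (bottom_node _ _) => [b|] /=; rewrite ?andbF //.
  case: (w0 =P k) => [->|]; rewrite ?andbF //.
  by case: (k =P k.+1) => [/n_Sn|]; rewrite ?andbF.
case B: (bottom_node j k) => [b|] /=; last by rewrite !andbF.
case: (t0 =P b) => [<-|ne]; last first.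
  by rewrite (_ : (Some b == Some t0) = false) ?andbF //; apply/eqP => -[e]; apply: ne.
rewrite walk_nth /= eqSS !eqxx /step_ok /=.
set A := all _ (iota 1 _); set C := all _ (iota 0 _).
case: (0 < k < nw); case: (size wo == _); case: (w0 == k); case: (last w0 wo == _);
case: (_ && uniq ts); case: [&& on_node _ _ _, _ & _]; case: A; case: C; by case: (next_node _ _ _ _ == None).
Qed.

Lemma next_nodeE j k w t : next_node j k w t =
  if upward k w then nextUp (wire_nodes j w) t else nextDn (wire_nodes j w) t.
Proof. by []. Qed.

Lemma wn_sorted j w : sorted ltn (wire_nodes j w).
Proof. apply: sorted_filter; [exact: ltn_trans|exact: iota_ltn_sorted]. Qed.

Lemma mem_wn j w t : (t \in wire_nodes j w) = (t < size j) && on_node j t w.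
Proof. by rewrite mem_filter mem_iota /= add0n andbC. Qed.

Lemma next_wn j k w t z : next_node j k w t = Some z -> z \in wire_nodes j w.
Proof.
rewrite next_nodeE; case: ifP => _.
  by case: (nextUpP t (wn_sorted j w)) => // z' ? _ _ [<-].
by case: (nextDnP t (wn_sorted j w)) => // z' ? _ _ [<-].
Qed.

Lemma bottomE j w : bottom_node j w = nextUp (wire_nodes j w) (size j).
Proof.
rewrite /bottom_node /nextUp; congr (ohead (rev _)).
rewrite -{1}(filter_predT (wire_nodes j w)); apply: eq_in_filter => x.
by rewrite mem_wn => /andP [].
Qed.

Lemma bottom_wn j w z : bottom_node j w = Some z -> z \in wire_nodes j w.
Proof. by rewrite bottomE; case: (nextUpP (size j) (wn_sorted j w)) => // z' ? _ _ [<-]. Qed.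

Lemma next_inj j k w u1 u2 z : u1 \in wire_nodes j w -> u2 \in wire_nodes j w ->
  next_node j k w u1 = Some z -> next_node j k w u2 = Some z -> u1 = u2.
Proof.
move=> i1 i2; rewrite !next_nodeE; case: ifP => _.
  case: (nextUpP u1 (wn_sorted j w)) => // z1 _ l1 m1 [<-].
  case: (nextUpP u2 (wn_sorted j w)) => // z2 _ l2 m2 [e].
  subst z2; apply/eqP; rewrite eqn_leq; apply/andP; split; rewrite leqNgt; apply/negP => h.
    by have := m1 _ i2 h; rewrite leqNgt l2.
  by have := m2 _ i1 h; rewrite leqNgt l1.
case: (nextDnP u1 (wn_sorted j w)) => // z1 _ l1 m1 [<-].
case: (nextDnP u2 (wn_sorted j w)) => // z2 _ l2 m2 [e].
subst z2; apply/eqP; rewrite eqn_leq; apply/andP; split; rewrite leqNgt; apply/negP => h.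
  by have := m2 _ i1 h; rewrite leqNgt l1.
by have := m1 _ i2 h; rewrite leqNgt l2.
Qed.

Lemma bottom_not_next j k w u z : upward k w -> u \in wire_nodes j w ->
  next_node j k w u = Some z -> bottom_node j w = Some z -> False.
Proof.
move=> up ui; rewrite next_nodeE up bottomE.
case: (nextUpP u (wn_sorted j w)) => // z1 _ l1 m1 [<-].
case: (nextUpP (size j) (wn_sorted j w)) => // z2 _ l2 m2 [e]; subst z2.
have : u < size j by move: ui; rewrite mem_wn => /andP [].
by move=> /(m2 _ ui); rewrite leqNgt l1.
Qed.

Lemma two_wires j t a b e : on_node j t a -> on_node j t b -> on_node j t e ->
  a != e -> b != e -> a = b.
Proof.
rewrite /on_node => /orP [] /eqP -> /orP [] /eqP -> /orP [] /eqP -> //;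
  by rewrite ?eqxx.
Qed.

Lemma dup_filter (a : pred nat) s p q : p < q -> q < size s -> nth 0 s p = nth 0 s q ->
  a (nth 0 s p) -> ~~ uniq [seq x <- s | a x].
Proof.
move=> pq qs e ap; rewrite -(cat_take_drop q s) filter_cat cat_uniq; apply/negP => /and3P [_ H _].
move/negP: H; apply; apply/hasP; exists (nth 0 s p).
  rewrite mem_filter ap /=; have -> : nth 0 s p = nth 0 (drop q s) 0 by rewrite nth_drop addn0.
  by apply: mem_nth; rewrite size_drop subn_gt0.
rewrite mem_filter ap /= -(nth_take 0 pq); apply: mem_nth; rewrite size_take qs //.
Qed.

Lemma uniq_lift j k e (X : pred nat) ws ts :
  (forall x, X x -> x < size j -> on_node j x e) ->
  upward k k ->
  nth 0 ws 0 = k -> bottom_node j k = Some (nth 0 ts 0) ->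
  (forall i, i < size ts -> nth 0 ts i \in wire_nodes j (nth 0 ws i)) ->
  (forall i, i < size ts -> on_node j (nth 0 ts i) (nth 0 ws i.+1)) ->
  (forall i, i.+1 < size ts -> next_node j k (nth 0 ws i.+1) (nth 0 ts i) = Some (nth 0 ts i.+1)) ->
  (forall i, i < size ts -> nth 0 ws i != e) ->
  uniq [seq x <- ts | ~~ X x] -> uniq ts.
Proof.
move=> HX up w0 b0 Hwn Hon Hnx Hne U; apply/negPn/negP => /(uniqPn 0) [p [q [pq qs e1]]].
elim: p q pq qs e1 => [|p IH] q pq qs e1.
- case Xp: (X (nth 0 ts 0)).
    have s0 : nth 0 ts 0 \in wire_nodes j (nth 0 ws 0) by apply: Hwn; exact: ltn_trans qs.
    have sq : nth 0 ts q \in wire_nodes j (nth 0 ws q) by apply: Hwn.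
    have ee : nth 0 ws q = k.
      rewrite -w0; apply: (@two_wires j (nth 0 ts 0) _ _ e).
      + by rewrite e1; move: sq; rewrite mem_wn => /andP [].
      + by move: s0; rewrite mem_wn => /andP [].
      + by apply: HX => //; move: s0; rewrite mem_wn => /andP [].
      + exact: Hne.
      + apply: Hne; exact: ltn_trans qs.
    case: q pq qs e1 sq ee => // q _ qs e1 sq ee.
    apply: (@bottom_not_next j k k (nth 0 ts q) (nth 0 ts 0) up).
    + have := Hwn q (ltn_trans (ltnSn q) qs); rewrite !mem_wn => /andP [-> _] /=.
      by rewrite -ee; apply: Hon; exact: ltn_trans (ltnSn q) qs.
    + by rewrite e1 -Hnx // ee.
    + by [].
  by move: U; apply/negP; apply: (dup_filter (a := fun x => ~~ X x)) pq qs e1 _; rewrite Xp.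
- case Xp: (X (nth 0 ts p.+1)).
    have s0 : nth 0 ts p.+1 \in wire_nodes j (nth 0 ws p.+1) by apply: Hwn; exact: ltn_trans qs.
    have sq : nth 0 ts q \in wire_nodes j (nth 0 ws q) by apply: Hwn.
    have ee : nth 0 ws q = nth 0 ws p.+1.
      apply: (@two_wires j (nth 0 ts p.+1) _ _ e).
      + by rewrite e1; move: sq; rewrite mem_wn => /andP [].
      + by move: s0; rewrite mem_wn => /andP [].
      + by apply: HX => //; move: s0; rewrite mem_wn => /andP [].
      + exact: Hne.
      + apply: Hne; exact: ltn_trans qs.
    case: q pq qs e1 sq ee => // q pq qs e1 sq ee.
    apply: (IH q) => //; first exact: ltn_trans qs.
    have hp : p < size ts := ltn_trans (pq : p < q) (ltnW qs).
    have hq : q < size ts by exact: ltn_trans qs.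
    apply: (@next_inj j k (nth 0 ws p.+1) _ _ (nth 0 ts p.+1)).
    + have := Hwn p hp; rewrite !mem_wn => /andP [-> _] /=; exact: Hon.
    + have := Hwn q hq; rewrite !mem_wn => /andP [-> _] /=; rewrite -ee; exact: Hon.
    + apply: Hnx; exact: ltn_trans qs.
    + by rewrite e1 -ee; apply: Hnx.
  by move: U; apply/negP; apply: (dup_filter (a := fun x => ~~ X x)) pq qs e1 _; rewrite Xp.
Qed.

Lemma reach_ext nx1 nx2 X o1 o2 : (forall x, nx1 x = nx2 x) -> reach nx1 X o1 o2 -> reach nx2 X o1 o2.
Proof.
move=> E; elim => [|z nz|z o Xz _ IH]; [exact: R_none|exact: R_good|].
by apply: R_bad => //; rewrite -E.
Qed.

Lemma ohead_map (f : nat -> nat) s : ohead (map f s) = omap f (ohead s).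
Proof. by case: s. Qed.

Section Mono.
Variable phi : nat -> nat.
Hypothesis Hmono : forall a b, (phi a < phi b) = (a < b).
Lemma nextUp_map l t : nextUp (map phi l) (phi t) = omap phi (nextUp l t).
Proof.
rewrite /nextUp -ohead_map map_rev filter_map; congr (ohead (rev (map _ _))).
by apply: eq_filter => x /=; rewrite Hmono.
Qed.
Lemma nextDn_map l t : nextDn (map phi l) (phi t) = omap phi (nextDn l t).
Proof.
rewrite /nextDn -ohead_map filter_map; congr (ohead (map _ _)).
by apply: eq_filter => x /=; rewrite Hmono.
Qed.
End Mono.

Fixpoint swr j e (w : nat) (wouts ts : seq nat) : bool :=
  match wouts, ts with
  | w' :: wo, t :: ts' => ((w != w') && on_node j t e) || swr j e w' wo ts'
  | _, _ => false
  end.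

Lemma has_iotaS (P : pred nat) m : has P (iota 0 m.+1) = P 0 || has (fun i => P i.+1) (iota 0 m).
Proof.
rewrite /=; congr (_ || _); have -> : iota 1 m = map (addn 1) (iota 0 m) by rewrite -iotaDl.
by rewrite has_map; apply: eq_has => i /=; rewrite add1n.
Qed.

Lemma swrE j e k w0 wo ts : size wo = size ts ->
  switches_on j e (k, w0 :: wo, ts) = swr j e w0 wo ts.
Proof.
rewrite /switches_on /pws /pts /=.
elim: ts w0 wo => [|t ts IH] w0 [|w1 wo] //= [sz].
congr (_ || _); rewrite -IH // /=.
rewrite (_ : iota 1 (size ts) = map (addn 1) (iota 0 (size ts))) ?has_map; last by rewrite -iotaDl.
by apply: eq_has => i /=.
Qed.

Section Sim.
Variables (ji je : seq nat) (nwi nwe e : nat) (X : pred nat) (phi phiinv psi psiinv : nat -> nat).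
Hypothesis Hphi_mono : forall a b, (phi a < phi b) = (a < b).
Hypothesis HphiK : cancel phi phiinv.
Hypothesis Hphiinv_inj : forall x y, ~~ X x -> ~~ X y -> phiinv x = phiinv y -> x = y.
Hypothesis HpsiK : cancel psi psiinv.
Hypothesis Hpsi_mono : forall a b, (psi a <= psi b) = (a <= b).
Hypothesis HpsiS : forall a, psi a.+1 = (psi a).+1.
Hypothesis Hpsie : forall a, 0 < a <= nwi -> psi a != e.
Hypothesis Hbnd : forall t, t < size ji -> (0 < nodeL ji t <= nwi) && (0 < nodeR ji t <= nwi).
Hypothesis HphiX : forall t, ~~ X (phi t).
Hypothesis Hnodes : forall t, t < size ji ->
  nodeL je (phi t) = psi (nodeL ji t) /\ nodeR je (phi t) = psi (nodeR ji t).
Hypothesis Hwn : forall w, [seq x <- wire_nodes je (psi w) | ~~ X x] = map phi (wire_nodes ji w).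
Hypothesis Hsize : phi (size ji) = size je.
Hypothesis HXe : forall x, X x -> x < size je -> on_node je x e.
Hypothesis HXst : forall k x a, 0 < k < nwi -> X x -> x < size je -> on_node je x a -> a != e ->
  straight_ok je (psi k) a x.
Hypothesis Hk : forall k', 0 < k' < nwe -> k' != e -> k'.+1 != e -> exists2 k, 0 < k < nwi & k' = psi k.
Hypothesis Hkr : forall k, 0 < k < nwi -> 0 < psi k < nwe.

Lemma psi_inj : injective psi.
Proof. exact: can_inj HpsiK. Qed.
Lemma psi_lt a b : (psi a < psi b) = (a < b).
Proof. by rewrite !ltnNge Hpsi_mono. Qed.
Lemma psi_eq a b : (psi a == psi b) = (a == b).
Proof. by apply/eqP/eqP => [/psi_inj|->]. Qed.

Lemma on_phi t w : t < size ji -> on_node je (phi t) (psi w) = on_node ji t w.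
Proof. by move=> /Hnodes [L R]; rewrite /on_node L R !psi_eq. Qed.

Lemma on_phi_e t : t < size ji -> on_node je (phi t) e = false.
Proof.
move=> tl; have /andP [b1 b2] := Hbnd tl; move: tl => /Hnodes [L R].
by rewrite /on_node L R ![e == _]eq_sym (negbTE (Hpsie b1)) (negbTE (Hpsie b2)).
Qed.

Lemma on_phi_inv t a : t < size ji -> on_node je (phi t) a -> a = psi (psiinv a).
Proof. by move=> /Hnodes [L R]; rewrite /on_node L R => /orP [] /eqP ->; rewrite HpsiK. Qed.

Lemma other_phi t w : t < size ji -> other je (phi t) (psi w) = psi (other ji t w).
Proof. by move=> /Hnodes [L R]; rewrite /other L R psi_eq; case: ifP. Qed.

Lemma up_psi k w : upward (psi k) (psi w) = upward k w.
Proof. by rewrite /upward Hpsi_mono. Qed.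

Lemma straight_phi k t w : t < size ji -> straight_ok je (psi k) (psi w) (phi t) = straight_ok ji k w t.
Proof. by move=> tl; rewrite /straight_ok other_phi // !up_psi !psi_lt. Qed.

Lemma step_phi k t w w' : t < size ji ->
  step_ok je (psi k) (phi t) (psi w) (psi w') = step_ok ji k t w w'.
Proof. by move=> tl; rewrite /step_ok !on_phi // psi_eq straight_phi. Qed.

Lemma next_phi k w t : reach (next_node je (psi k) (psi w)) X
  (next_node je (psi k) (psi w) (phi t)) (omap phi (next_node ji k w t)).
Proof.
rewrite [next_node ji _ _ _]next_nodeE [next_node je _ _ (phi t)]next_nodeE up_psi.
case: ifP => up.
  apply: (@reach_ext (nextUp (wire_nodes je (psi w)))); first by move=> x; rewrite next_nodeE up_psi up.
  by rewrite -nextUp_map // -Hwn; apply: reach_up; exact: wn_sorted.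
apply: (@reach_ext (nextDn (wire_nodes je (psi w)))); first by move=> x; rewrite next_nodeE up_psi up.
by rewrite -nextDn_map // -Hwn; apply: reach_dn; exact: wn_sorted.
Qed.

Lemma bottom_phi k : reach (next_node je (psi k) (psi k)) X
  (bottom_node je (psi k)) (omap phi (bottom_node ji k)).
Proof.
rewrite !bottomE -Hsize.
apply: (@reach_ext (nextUp (wire_nodes je (psi k)))); first by move=> x; rewrite next_nodeE up_psi /upward leqnn.
by rewrite -nextUp_map // -Hwn; apply: reach_up; exact: wn_sorted.
Qed.

Lemma nonX_wn w z : z \in wire_nodes je (psi w) -> ~~ X z ->
  exists2 t, z = phi t & t \in wire_nodes ji w.
Proof.
move=> zi nz; have : z \in [seq x <- wire_nodes je (psi w) | ~~ X x] by rewrite mem_filter nz.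
by rewrite Hwn => /mapP [t ti ->]; exists t.
Qed.

Definition filt (ts ws : seq nat) := map snd [seq p <- zip ts ws | ~~ X p.1].

Lemma filt_cons t ts w ws : filt (t :: ts) (w :: ws) = if X t then filt ts ws else w :: filt ts ws.
Proof. by rewrite /filt /=; case: (X t). Qed.


Lemma omapK o : omap phiinv (omap phi o) = o.
Proof. by case: o => //= x; rewrite HphiK. Qed.

Lemma filterphi t ts : [seq x <- phi t :: ts | ~~ X x] = phi t :: [seq x <- ts | ~~ X x].
Proof. by rewrite /= HphiX. Qed.

Lemma filterX z ts : X z -> [seq x <- z :: ts | ~~ X x] = [seq x <- ts | ~~ X x].
Proof. by move=> Xz; rewrite /= Xz. Qed.

Lemma claimB N : forall k o1 o2 w ws ts, size ts = N -> 0 < k < nwi ->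
  reach (next_node je (psi k) (psi w)) X o1 o2 ->
  (forall z, o1 = Some z -> z \in wire_nodes je (psi w)) ->
  cont je (psi k) o1 (psi w) ws ts -> ~~ swr je e (psi w) ws ts ->
  cont ji k (omap phiinv o2) w (map psiinv (filt ts ws)) (map phiinv [seq x <- ts | ~~ X x]).
Proof.
elim/ltn_ind: N => N IH k o1 o2 w ws ts Hs Hk' R.
case: R => [|z nz|z o Xz R'] Hinv.
- rewrite /cont => /andP [/andP [/eqP -> /eqP ->] /eqP E] _ /=.
  by rewrite -HpsiS in E; rewrite (psi_inj E) eqxx.
- case: ts Hs => [|t1 ts] Hs; first by [].
  rewrite cont_some => /andP [/eqP et Hw]; subst t1.
  case: ws Hw => [|wout ws]; first by [].
  rewrite walk_cons => /andP [st C]; rewrite [swr _ _ _ _ _]/= => Hsw.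
  have [t zt tin] := nonX_wn (Hinv z erefl) nz; subst z.
  have tl : t < size ji by move: tin; rewrite mem_wn => /andP [].
  have ew : wout = psi (psiinv wout) by apply: (on_phi_inv tl); move: st => /and3P [].
  move: (psiinv wout) ew => w' ew; subst wout.
  rewrite step_phi // in st.
  rewrite filt_cons (negbTE (HphiX t)) filterphi map_cons map_cons !HphiK HpsiK [omap _ _]/= HphiK cont_some eqxx walk_cons st /=.
  rewrite -[next_node ji _ _ _]omapK.
  apply: (IH (size ts)) C _ => //.
  + by rewrite -Hs.
  + exact: next_phi.
  + by move=> z' E; apply: next_wn E.
  + by move: Hsw; rewrite negb_or => /andP [].
- case: ts Hs => [|t1 ts] Hs; first by [].
  rewrite cont_some => /andP [/eqP et Hw]; subst t1.
  case: ws Hw => [|wout ws]; first by [].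
  rewrite walk_cons => /andP [st C]; rewrite [swr _ _ _ _ _]/= => Hsw.
  have zl : z \in wire_nodes je (psi w) by exact: Hinv.
  have ez : on_node je z e by apply: HXe => //; move: zl; rewrite mem_wn => /andP [].
  have ew : wout = psi w.
    by move: Hsw; rewrite ez andbT negb_or negbK => /andP [/eqP ->].
  subst wout.
  rewrite filt_cons Xz /= Xz.
  apply: (IH (size ts)) C _ => //.
  + by rewrite -Hs.
  + by move=> z' E; apply: next_wn E.
  + by move: Hsw; rewrite negb_or => /andP [].
Qed.

Lemma phi_inj : injective phi.
Proof. exact: can_inj HphiK. Qed.

Lemma on_bnd t a : t < size ji -> on_node ji t a -> 0 < a <= nwi.
Proof. by move=> /Hbnd /andP [b1 b2] /orP [] /eqP ->. Qed.

Lemma claimC N : forall k o2 w ws ts, size ts = N -> 0 < k < nwi -> 0 < w <= nwi -> cont ji k o2 w ws ts ->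
  forall o1 o2', reach (next_node je (psi k) (psi w)) X o1 o2' -> o2' = omap phi o2 ->
  (forall z, o1 = Some z -> z \in wire_nodes je (psi w)) ->
  exists ws', exists ts', [/\ cont je (psi k) o1 (psi w) ws' ts', ~~ swr je e (psi w) ws' ts',
     map psiinv (filt ts' ws') = ws & map phiinv [seq x <- ts' | ~~ X x] = ts].
Proof.
elim/ltn_ind: N => N IH k o2 w ws ts Hs Hk' Hwb Hc o1 o2' R.
elim: R o2 ws ts Hs Hc => [|z nz|z o Xz R' IHr] o2 ws ts Hs Hc Eo Hinv.
- case: o2 Eo Hc => // _ /andP [/andP [/eqP -> /eqP ->] /eqP ->].
  by exists [::], [::]; split => //=; rewrite HpsiS eqxx.
- case: o2 Eo Hc => // t [ez]; subst z.
  case: ts Hs => [|t1 ts] Hs; first by [].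
  rewrite cont_some => /andP [/eqP et Hw]; subst t1.
  case: ws Hw => [|w' ws]; first by [].
  rewrite walk_cons => /andP [st C].
  have tl : t < size ji.
    have [t1 e1 t1in] := nonX_wn (Hinv _ erefl) nz.
    by move: t1in; rewrite -(phi_inj e1) mem_wn => /andP [].
  have Hlt : size ts < N by rewrite -Hs.
  have Hw' : 0 < w' <= nwi by apply: (on_bnd tl); move: st => /and3P [].
  have [ws1 [ts1 [C1 S1 F1 G1]]] := IH (size ts) Hlt k _ w' ws ts erefl Hk' Hw' C
     _ _ (next_phi k w' t) erefl (fun z' E => next_wn E).
  exists (psi w' :: ws1), (phi t :: ts1); split.
  + by rewrite cont_some eqxx walk_cons step_phi // st C1.
  + by rewrite /= on_phi_e // andbF /= S1.
  + by rewrite filt_cons (negbTE (HphiX t)) map_cons HpsiK F1.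
  + by rewrite filterphi map_cons HphiK G1.
- have [ws1 [ts1 [C1 S1 F1 G1]]] := IHr o2 ws ts Hs Hc Eo (fun z' E => next_wn E).
  have zl : z \in wire_nodes je (psi w) by exact: Hinv.
  have zs : z < size je by move: zl; rewrite mem_wn => /andP [].
  have zo : on_node je z (psi w) by move: zl; rewrite mem_wn => /andP [].
  exists (psi w :: ws1), (z :: ts1); split.
  + rewrite cont_some eqxx walk_cons C1 andbT /step_ok zo eqxx /=.
    by apply: HXst => //; apply: Hpsie.
  + by rewrite /= eqxx /= S1.
  + by rewrite filt_cons Xz F1.
  + by rewrite filterX.
Qed.

Lemma claimD N : forall k o w ws1 ts1 ws2 ts2, size ts1 = N ->
  cont je (psi k) o (psi w) ws1 ts1 -> cont je (psi k) o (psi w) ws2 ts2 ->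
  ~~ swr je e (psi w) ws1 ts1 -> ~~ swr je e (psi w) ws2 ts2 ->
  (forall z, o = Some z -> z \in wire_nodes je (psi w)) ->
  map psiinv (filt ts1 ws1) = map psiinv (filt ts2 ws2) ->
  map phiinv [seq x <- ts1 | ~~ X x] = map phiinv [seq x <- ts2 | ~~ X x] ->
  ws1 = ws2 /\ ts1 = ts2.
Proof.
elim/ltn_ind: N => N IH k o w ws1 ts1 ws2 ts2 Hs C1 C2 S1 S2 Hinv F G.
case: o Hinv C1 C2 => [z|] Hinv; last first.
  by move=> /andP[/andP[/eqP -> /eqP ->] _] /andP[/andP[/eqP -> /eqP ->] _].
case: ts1 Hs S1 F G => [|t1 ts1] Hs S1 F G; first by [].
case: ts2 S2 F G => [|t2 ts2] S2 F G; first by move=> _.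
rewrite !cont_some => /andP [/eqP e1 W1] /andP [/eqP e2 W2]; subst t1 t2.
case: ws1 S1 F W1 => [|wo1 ws1] S1 F; first by [].
case: ws2 S2 F W2 => [|wo2 ws2] S2 F; first by [].
rewrite !walk_cons => /andP [st2 C2] /andP [st1 C1].
have zl : z \in wire_nodes je (psi w) by exact: Hinv.
have zs : z < size je by move: zl; rewrite mem_wn => /andP [].
have Hlt : size ts1 < N by rewrite -Hs.
move: S1 S2; rewrite /= !negb_or => /andP [S1a S1] /andP [S2a S2].
case Xz: (X z).
  have ez : on_node je z e by exact: HXe.
  move: S1a S2a; rewrite ez !andbT !negbK => /eqP ew1 /eqP ew2; subst wo1 wo2.
  move: F G; rewrite !filt_cons Xz !filterX // => F G.
  have [-> ->] := IH _ Hlt _ _ _ _ _ _ _ erefl C1 C2 S1 S2 (fun z' E => next_wn E) F G.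
  by [].
have [t zt tin] := nonX_wn zl (negbT Xz); subst z.
have tl : t < size ji by move: tin; rewrite mem_wn => /andP [].
have ew1 : wo1 = psi (psiinv wo1) by apply: (on_phi_inv tl); move: st1 => /and3P [].
have ew2 : wo2 = psi (psiinv wo2) by apply: (on_phi_inv tl); move: st2 => /and3P [].
move: F G; rewrite !filt_cons Xz !filterphi !map_cons; case=> Fh F; case=> G.
have ew : wo1 = wo2 by rewrite ew1 ew2 Fh.
subst wo2; rewrite ew1 in C1 C2 S1 S2.
have [-> ->] := IH _ Hlt _ _ _ _ _ _ _ erefl C1 C2 S1 S2 (fun z' E => next_wn E) F G.
by [].
Qed.

Lemma cont_facts j k wo ts : cont j k (bottom_node j k) k wo ts ->
  size wo = size ts /\ 0 < size ts /\ bottom_node j k = Some (nth 0 ts 0) /\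
   (forall i, i < size ts -> nth 0 ts i \in wire_nodes j (nth 0 (k :: wo) i)) /\
   (forall i, i < size ts -> on_node j (nth 0 ts i) (nth 0 (k :: wo) i.+1)) /\
   (forall i, i.+1 < size ts -> next_node j k (nth 0 (k :: wo) i.+1) (nth 0 ts i) = Some (nth 0 ts i.+1)) /\
   nth 0 (k :: wo) (size ts) = k.+1.
Proof.
case B: (bottom_node j k) => [b|]; last by rewrite /cont => /andP [_ /eqP /n_Sn].
case: ts => [|t0 ts]; first by [].
rewrite cont_some => /andP [/eqP et W]; subst b.
rewrite walk_nth in W; case/and5P: W => /eqP sz Ast Anx _ /eqP Hl.
have stp : forall i, i < size (t0 :: ts) ->
    step_ok j k (nth 0 (t0 :: ts) i) (nth 0 (k :: wo) i) (nth 0 (k :: wo) i.+1).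
  by move=> i hi; apply: (allP Ast); rewrite mem_iota.
have nx : forall i, i.+1 < size (t0 :: ts) ->
    next_node j k (nth 0 (k :: wo) i.+1) (nth 0 (t0 :: ts) i) = Some (nth 0 (t0 :: ts) i.+1).
  by move=> i hi; apply/eqP; apply: (allP Anx); rewrite mem_iota.
split; first by rewrite sz.
split => //; split => //.
split.
  case=> [|i] hi; first exact: bottom_wn B.
  by apply: next_wn; apply: nx.
split; first by move=> i /stp /and3P [].
split; first exact: nx.
rewrite (_ : size (t0 :: ts) = (size (k :: wo)).-1); last by rewrite /= sz.
by rewrite nth_last.
Qed.

Lemma nsw_nth j ee k ws ts : ~~ switches_on j ee (k, ws, ts) ->
  forall i, i < size ts -> ~~ ((nth 0 ws i != nth 0 ws i.+1) && on_node j (nth 0 ts i) ee).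
Proof. by move=> /hasPn H i hi; apply: H; rewrite mem_iota. Qed.

Lemma wires_nth j ee ws ts :
  (forall i, i < size ts -> ~~ ((nth 0 ws i != nth 0 ws i.+1) && on_node j (nth 0 ts i) ee)) ->
  (forall i, i < size ts -> on_node j (nth 0 ts i) (nth 0 ws i)) ->
  (forall i, i < size ts -> on_node j (nth 0 ts i) (nth 0 ws i.+1)) ->
  forall i, i <= size ts -> (nth 0 ws i == ee) = (nth 0 ws 0 == ee).
Proof.
move=> Hn H1 H2; elim=> // i IH hi.
have hi' : i < size ts by [].
rewrite -IH ?(ltnW hi) //.
have := Hn i hi'; have := H1 i hi'; have := H2 i hi'.
case: (nth 0 ws i =P ee) => [E|NE].
  by rewrite E => _ -> ; rewrite andbT negbK => /eqP <-; rewrite eqxx.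
case: (nth 0 ws i.+1 =P ee) => [E|//].
by rewrite E => -> _; rewrite andbT negbK => /eqP.
Qed.

Definition contract (Q : path_data) : path_data :=
  (psiinv (pk Q), map psiinv (head 0 (pws Q) :: filt (pts Q) (behead (pws Q))),
   map phiinv [seq x <- pts Q | ~~ X x]).

Lemma uniq_map_phiinv ts : uniq (map phiinv [seq x <- ts | ~~ X x]) = uniq [seq x <- ts | ~~ X x].
Proof.
apply: map_inj_in_uniq => x y; rewrite !mem_filter => /andP [nx _] /andP [ny _].
exact: Hphiinv_inj.
Qed.

Lemma contract_ok Q : rigorous nwe je Q -> ~~ switches_on je e Q ->
  exists k, exists wo, 0 < k < nwi /\ Q = (psi k, psi k :: wo, pts Q) /\
    cont je (psi k) (bottom_node je (psi k)) (psi k) wo (pts Q) /\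
    ~~ swr je e (psi k) wo (pts Q) /\ rigorous nwi ji (contract Q).
Proof.
case: Q => [[k' ws] ts]; rewrite rigE /pts /= => /and4P [kr U /eqP hw C] nsw.
case: ws hw C nsw => [|w0 wo] /= hw; first by move: kr; rewrite -hw.
subst w0 => C nsw.
have [sz [ts0 [b0 [Hwn' [Hon [Hnx Hl]]]]]] := cont_facts C.
have Hwi := wires_nth (nsw_nth nsw) (fun i hi => (proj2 (andP (etrans (esym (mem_wn _ _ _)) (Hwn' i hi))))) Hon (leqnn (size ts)).
rewrite Hl /= in Hwi.
have ke : k' != e.
  by apply/negP => /eqP E; move: Hwi; rewrite E eqxx => /eqP H; case: (n_Sn _ (esym H)).
have ke1 : k'.+1 != e by rewrite Hwi.
have [k kr' ek] := Hk kr ke ke1; subst k'.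
rewrite swrE // in nsw.
exists k, wo; do 4 split => //.
rewrite rigE /contract /pk /pws /pts /= HpsiK kr' eqxx uniq_map_phiinv filter_uniq //=.
rewrite -[bottom_node ji k]omapK.
apply: (claimB erefl kr' (bottom_phi k)) => //.
by move=> z E; apply: bottom_wn E.
Qed.

Lemma lift_ok P : rigorous nwi ji P ->
  exists Q, rigorous nwe je Q && ~~ switches_on je e Q && (contract Q == P).
Proof.
case: P => [[k ws] ts]; rewrite rigE /= => /and4P [kr U /eqP hw C].
case: ws hw C => [|w0 wo] /= hw; first by move: kr; rewrite -hw.
subst w0 => C.
have kb : 0 < k <= nwi by case/andP: kr => -> /ltnW.
have [ws1 [ts1 [C1 S1 F1 G1]]] := claimC erefl kr kb C (bottom_phi k) erefl (fun z E => bottom_wn E).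
have [sz [ts0 [b0 [Hwn' [Hon [Hnx Hl]]]]]] := cont_facts C1.
have nsw : ~~ switches_on je e (psi k, psi k :: ws1, ts1) by rewrite swrE.
have Hwi := wires_nth (nsw_nth nsw) (fun i hi => (proj2 (andP (etrans (esym (mem_wn _ _ _)) (Hwn' i hi))))) Hon.
exists (psi k, psi k :: ws1, ts1); rewrite nsw andbT.
apply/andP; split.
  rewrite rigE /= Hkr // eqxx C1 andbT /=.
  rewrite andbT; apply: (uniq_lift (ws := psi k :: ws1) (X := X) HXe) => //.
  - by rewrite /upward leqnn.
  - move=> i hi; rewrite Hwi ?(ltnW hi) //=; exact: Hpsie.
  - by rewrite -uniq_map_phiinv G1.
by rewrite /contract /pk /pws /pts /= HpsiK F1 G1.
Qed.

Lemma contract_inj Q1 Q2 : rigorous nwe je Q1 -> ~~ switches_on je e Q1 ->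
  rigorous nwe je Q2 -> ~~ switches_on je e Q2 -> contract Q1 = contract Q2 -> Q1 = Q2.
Proof.
case: Q1 => [[a1 b1] ts1]; case: Q2 => [[a2 b2] ts2] r1 n1 r2 n2.
have [k1 [wo1 [kr1 [E1 [C1 [S1 _]]]]]] := contract_ok r1 n1.
have [k2 [wo2 [kr2 [E2 [C2 [S2 _]]]]]] := contract_ok r2 n2.
rewrite /pts /= in E1 C1 S1 E2 C2 S2.
case: E1 => -> ->; case: E2 => -> ->.
rewrite /contract /pk /pws /pts /= !HpsiK => -[ek _ F G]; subst k2.
have [-> ->] := claimD erefl C1 C2 S1 S2 (fun z E => bottom_wn E) F G.
by [].
Qed.

Theorem sim_main : exists f : GP nwi ji -> GP nwe je, injective f /\
  forall Q : GP nwe je, (exists P, f P = Q) <-> ~~ switches_on je e (val Q).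
Proof.
pose pr (P : path_data) (Q : path_data) := rigorous nwe je Q && ~~ switches_on je e Q && (contract Q == P).
have ex : forall P : GP nwi ji, exists Q, pr (val P) Q by move=> P; exact: lift_ok (valP P).
pose g (P : GP nwi ji) := xchoose (ex P).
have gP : forall P, pr (val P) (g P) := fun P => xchooseP (ex P).
have gr : forall P, rigorous nwe je (g P) by move=> P; case/andP: (gP P) => /andP [].
exists (fun P => exist _ (g P) (gr P)); split.
  move=> P1 P2 /(congr1 val) /= E; apply: val_inj.
  case/andP: (gP P1) => _ /eqP <-; case/andP: (gP P2) => _ /eqP <-; by rewrite E.
move=> Q; split.
  by move=> [P <-] /=; case/andP: (gP P) => /andP [].
move=> nq.
have [k [wo [_ [_ [_ [_ R]]]]]] := contract_ok (valP Q) nq.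
exists (exist _ (contract (val Q)) R); apply: val_inj => /=.
have := gP (exist _ (contract (val Q)) R); rewrite /pr /= => /andP [/andP [r n] /eqP c].
exact: contract_inj r n (valP Q) nq c.
Qed.

End Sim.

Notation F l p := (foldr (fun a q => sw a q) p l).

Lemma swS a q : sw a.+1 q.+1 = (sw a q).+1.
Proof. by rewrite /sw !eqSS; case: ifP => //; case: ifP. Qed.

Lemma F_mapS l q : F (map S l) q.+1 = (F l q).+1.
Proof. by elim: l => //= a l ->; rewrite swS. Qed.

Lemma F_fix l p : all (fun a => (p != a) && (p != a.+1)) l -> F l p = p.
Proof.
elim: l => //= a l IH /andP [/andP [h1 h2] /IH ->].
by rewrite /sw (negbTE h1) (negbTE h2).
Qed.

Lemma sw_bnd N a p : 0 < a < N -> 0 < p <= N -> 0 < sw a p <= N.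
Proof. rewrite /sw; case: eqP => [->|_]; [lia|]; case: eqP => [->|_]; lia. Qed.

Lemma F_bnd N l p : all (fun a => 0 < a < N) l -> 0 < p <= N -> 0 < F l p <= N.
Proof.
elim: l => //= a l IH /andP [ha hl] hp.
by apply: sw_bnd => //; apply: IH.
Qed.

Lemma F_iota a m v : a <= v < a + m -> F (iota a m) v = v.+1.
Proof.
elim: m a => [|m IH] a hv; first lia.
rewrite /=; case: (v =P a) => [->|ne].
  rewrite F_fix; first by rewrite /sw eqxx.
  by apply/allP => x; rewrite mem_iota => hx; apply/andP; split; apply/eqP; lia.
rewrite IH; last lia.
by rewrite /sw; case: eqP => [|_]; [lia|]; case: eqP => [|_] //; lia.
Qed.

Lemma F_iota_top a m : F (iota a m) (a + m) = a.
Proof.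
elim: m a => [|m IH] a; first by rewrite addn0.
by rewrite /= -addSnnS IH /sw eqn_leq ltnn /= eqxx.
Qed.

Lemma F_rev l p : F (rev l) p = foldl (fun q a => sw a q) p l.
Proof. by rewrite -[in RHS](revK l) foldl_rev. Qed.

Lemma F_rev_iota a m v : a < v <= a + m -> F (rev (iota a m)) v = v.-1.
Proof.
rewrite F_rev; elim: m a v => [|m IH] a v hv; first lia.
rewrite /=; case: (v =P a.+1) => [->|ne].
  rewrite /sw eqxx (_ : (a.+1 == a) = false); last by apply/eqP; lia.
  rewrite -F_rev F_fix //; apply/allP => x; rewrite mem_rev mem_iota => hx; apply/andP; split; apply/eqP; lia.
rewrite (_ : sw a v = v); last by rewrite /sw; case: eqP => [|_]; [lia|]; case: eqP => //; lia.
by rewrite IH //; lia.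
Qed.

Lemma F_rev_iota_bot a m : F (rev (iota a m)) a = a + m.
Proof.
rewrite F_rev; elim: m a => [|m IH] a; first by rewrite addn0.
by rewrite /= {2}/sw eqxx IH addSnnS.
Qed.

Lemma take_cat_add (T : Type) (A R : seq T) k : take (size A + k) (A ++ R) = A ++ take k R.
Proof. by rewrite take_cat ltnNge leq_addr /= addKn. Qed.

Lemma nth_cat_add (A R : seq nat) k : nth 0 (A ++ R) (size A + k) = nth 0 R k.
Proof. by rewrite nth_cat ltnNge leq_addr /= addKn. Qed.

Lemma nodeLE j t : nodeL j t = F (take t j) (nth 0 j t).
Proof. by []. Qed.
Lemma nodeRE j t : nodeR j t = F (take t j) (nth 0 j t).+1.
Proof. by []. Qed.

Lemma all_sub (P : pred nat) (l l' : seq nat) : all P l -> {subset l' <= l} -> all P l'.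
Proof. by move=> /allP H sub; apply/allP => x /sub /H. Qed.

Section Common.
Variables (n a s : nat).
Definition phiC t := if t < a then t else t + n.
Definition phiinvC x := if x < a then x else x - n.
Definition XC x := (a <= x) && (x < a + n).

Lemma phiC_mono x y : (phiC x < phiC y) = (x < y).
Proof. rewrite /phiC; case: ifP; case: ifP; lia. Qed.
Lemma phiCK : cancel phiC phiinvC.
Proof. move=> t; rewrite /phiinvC /phiC; case: (ltnP t a) => h //; case: ifP; lia. Qed.
Lemma phiinvC_inj x y : ~~ XC x -> ~~ XC y -> phiinvC x = phiinvC y -> x = y.
Proof. rewrite /XC /phiinvC; case: ifP; case: ifP; lia. Qed.
Lemma phiCX t : ~~ XC (phiC t).
Proof. rewrite /XC /phiC; case: ifP; lia. Qed.

Lemma filter_nonX_iota : [seq x <- iota 0 (a + n + s) | ~~ XC x] = map phiC (iota 0 (a + s)).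
Proof.
rewrite !iotaD !filter_cat map_cat !add0n.
have -> : [seq x <- iota 0 a | ~~ XC x] = iota 0 a.
  rewrite -{2}(filter_predT (iota 0 a)); apply: eq_in_filter => x; rewrite mem_iota /XC /=; lia.
have -> : [seq x <- iota a n | ~~ XC x] = [::].
  rewrite -(filter_pred0 (iota a n)); apply: eq_in_filter => x; rewrite mem_iota /XC /=; lia.
have -> : [seq x <- iota (a + n) s | ~~ XC x] = iota (a + n) s.
  rewrite -{2}(filter_predT (iota _ s)); apply: eq_in_filter => x; rewrite mem_iota /XC /=; lia.
have -> : map phiC (iota 0 a) = iota 0 a.
  rewrite -[RHS]map_id; apply/eq_in_map => x; rewrite mem_iota /phiC; case: ifP; lia.
have -> : map phiC (iota a s) = iota (a + n) s.
  rewrite (addnC a n) iotaDl; apply/eq_in_map => x; rewrite mem_iota /phiC; case: ifP; lia.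
by rewrite cats0.
Qed.

Lemma Hwn_gen (ji je : seq nat) (psi : nat -> nat) :
  size ji = a + s -> size je = a + n + s ->
  (forall t w, t < size ji -> on_node je (phiC t) (psi w) = on_node ji t w) ->
  forall w, [seq x <- wire_nodes je (psi w) | ~~ XC x] = map phiC (wire_nodes ji w).
Proof.
move=> si se H w; rewrite /wire_nodes -filter_predI.
rewrite (eq_filter (a2 := predI (fun x => on_node je x (psi w)) (fun x => ~~ XC x))); last first.
  by move=> x /=; rewrite andbC.
rewrite filter_predI se filter_nonX_iota filter_map si; congr map.
by apply: eq_in_filter => x; rewrite mem_iota /= => hx; apply: H; rewrite si; lia.
Qed.
End Common.

Lemma take_rev_iota n c : c <= n -> take c (rev (iota 1 n)) = rev (iota (n - c).+1 c).
Proof.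
move=> cn; rewrite (_ : n = (n - c) + c) ?subnKC //; last lia.
rewrite iotaD rev_cat (_ : n - c + c - c = n - c); last lia.
by rewrite add1n take_size_cat // size_rev size_iota.
Qed.

Lemma nth_rev_iota n c : c < n -> nth 0 (rev (iota 1 n)) c = n - c.
Proof. move=> cn; rewrite nth_rev size_iota // nth_iota; lia. Qed.

Section DCase.
Variables (n : nat) (A B : seq nat).
Hypothesis AllA : all (fun x => 0 < x < n) A.
Hypothesis AllB : all (fun x => 0 < x < n) B.

Let R := rev (iota 1 n).
Let je := A ++ R ++ map S B.
Let ji := A ++ B.

Lemma sR : size R = n. Proof. by rewrite /R size_rev size_iota. Qed.

Lemma AllR : all (fun x => 0 < x < n.+1) R.
Proof. by apply/allP => x; rewrite /R mem_rev mem_iota; lia. Qed.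

Lemma Allje : all (fun x => 0 < x < n.+1) je.
Proof.
rewrite /je !all_cat AllR /=; apply/andP; split.
  by apply: sub_all AllA => x /=; lia.
rewrite all_map; apply/allP => x xB; have := allP AllB x xB; rewrite /=; lia.
Qed.

Lemma all_take_ (P : pred nat) k l : all P l -> all P (take k l).
Proof. by move=> h; apply: all_sub h _ => x /mem_take. Qed.

Lemma nth_all (P : pred nat) l t : all P l -> t < size l -> P (nth 0 l t).
Proof. by move=> /allP h tl; apply: h; apply: mem_nth. Qed.

Lemma Dnodes t : t < size ji ->
  nodeL je (phiC n (size A) t) = nodeL ji t /\ nodeR je (phiC n (size A) t) = nodeR ji t.
Proof.
rewrite /phiC /ji /je size_cat => ht; rewrite !nodeLE !nodeRE.
case: (ltnP t (size A)) => hta.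
  by rewrite !take_cat !nth_cat hta.
have [c ec] : exists c, t = size A + c by exists (t - size A); lia.
subst t; have hc : c < size B by lia.
rewrite (_ : size A + c + n = size A + (size R + c)); last by rewrite sR; lia.
rewrite !(take_cat_add A) (take_cat_add R) !(nth_cat_add A) (nth_cat_add R) -map_take (nth_map 0) //.
rewrite !foldr_cat !F_mapS.
have bB := nth_all AllB hc; rewrite /= in bB.
have tB := all_take_ c AllB.
rewrite /R !F_rev_iota //.
- have := F_bnd (p := (nth 0 B c).+1) tB; lia.
- have := F_bnd (p := nth 0 B c) tB; lia.
Qed.

Lemma nodeR_X c : c < n -> nodeR je (size A + c) = n.+1.
Proof.
move=> cn; rewrite nodeRE /je take_cat_add nth_cat_add take_cat sR cn nth_cat sR cn.
rewrite /R nth_rev_iota // take_rev_iota; last lia.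
rewrite foldr_cat (F_rev_iota_bot (n - c).+1 c) (_ : (n - c).+1 + c = n.+1); last lia.
apply: F_fix; apply/allP => x xA; have := allP AllA x xA; rewrite /=; lia.
Qed.

Lemma nodeL_bnd x : x < size je -> 0 < nodeL je x <= n.+1.
Proof.
move=> xs; rewrite nodeLE; apply: F_bnd; first exact: all_take_ Allje.
have := nth_all Allje xs; rewrite /=; lia.
Qed.

Lemma sje : size je = size A + n + size B.
Proof. by rewrite /je !size_cat sR size_map addnA. Qed.

Lemma D_sim : exists f : GP n ji -> GP n.+1 je, injective f /\
  forall Q : GP n.+1 je, (exists P, f P = Q) <-> ~~ switches_on je n.+1 (val Q).
Proof.
have onE : forall t w, t < size ji -> on_node je (phiC n (size A) t) w = on_node ji t w.
  by move=> t w /Dnodes [L R']; rewrite /on_node L R'.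
apply: (@sim_main ji je n n.+1 n.+1 (XC n (size A)) (phiC n (size A)) (phiinvC n (size A)) id id).
- exact: phiC_mono.
- exact: phiCK.
- exact: phiinvC_inj.
- by [].
- by [].
- by [].
- by move=> x; rewrite /=; lia.
- move=> t ht; rewrite /ji nodeLE nodeRE.
  have Aij : all (fun x => 0 < x < n) (A ++ B) by rewrite all_cat AllA AllB.
  have := nth_all Aij ht => /= hb.
  have := F_bnd (p := nth 0 (A ++ B) t) (all_take_ t Aij).
  have := F_bnd (p := (nth 0 (A ++ B) t).+1) (all_take_ t Aij).
  move=> h1 h2; rewrite h1 ?h2 //; lia.
- exact: phiCX.
- exact: Dnodes.
- move=> w; apply: (Hwn_gen (psi := id)) => //.
  + by rewrite /ji size_cat.
  + exact: sje.
- by rewrite /phiC /ji size_cat sje ifF; lia.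
- move=> x /andP [h1 h2] _; have [c ec] : exists c, x = size A + c by exists (x - size A); lia.
  subst x; by rewrite /on_node nodeR_X ?eqxx ?orbT //; lia.
- move=> k x a' hk /andP [h1 h2] xs on ne.
  have [c ec] : exists c, x = size A + c by exists (x - size A); lia.
  have hR : nodeR je x = n.+1 by rewrite ec nodeR_X //; lia.
  have hL : a' = nodeL je x.
    by move: on; rewrite /on_node hR (negbTE ne) orbF => /eqP.
  have oth : other je x a' = n.+1 by rewrite /other -hL eqxx.
  have := nodeL_bnd xs; rewrite -hL => hb.
  rewrite /straight_ok oth /upward /=; move: hk; lia.
- move=> k' /andP [h1 h2] ne1 ne2; exists k' => //; apply/andP; split => //; lia.
- by move=> k /andP [h1 h2]; apply/andP; split => //; lia.
Qed.

End DCase.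

Section ACase.
Variables (n : nat) (A B : seq nat).
Hypothesis AllA : all (fun x => 0 < x < n) A.
Hypothesis AllB : all (fun x => 0 < x < n) B.

Let I := iota 1 n.
Let SA := map S A.
Let je := SA ++ I ++ B.
Let ji := A ++ B.

Lemma sI : size I = n. Proof. by rewrite /I size_iota. Qed.
Lemma sSA : size SA = size A. Proof. by rewrite /SA size_map. Qed.

Lemma Allje' : all (fun x => 0 < x < n.+1) je.
Proof.
rewrite /je !all_cat; apply/and3P; split.
- rewrite /SA all_map; apply/allP => x xA; have := allP AllA x xA; rewrite /=; lia.
- by apply/allP => x; rewrite /I mem_iota; lia.
- by apply: sub_all AllB => x /=; lia.
Qed.

Lemma Anodes t : t < size ji ->
  nodeL je (phiC n (size A) t) = (nodeL ji t).+1 /\ nodeR je (phiC n (size A) t) = (nodeR ji t).+1.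
Proof.
rewrite /phiC /ji /je size_cat => ht; rewrite !nodeLE !nodeRE.
case: (ltnP t (size A)) => hta.
  rewrite !take_cat !nth_cat sSA hta /SA -map_take (nth_map 0) //.
  by rewrite !F_mapS.
have [c ec] : exists c, t = size A + c by exists (t - size A); lia.
subst t; have hc : c < size B by lia.
rewrite (_ : size A + c + n = size SA + (size I + c)); last by rewrite sI sSA; lia.
rewrite !(take_cat_add SA) (take_cat_add I) !(nth_cat_add SA) (nth_cat_add I).
rewrite !(take_cat_add A) !(nth_cat_add A) !foldr_cat.
have bB := nth_all AllB hc; rewrite /= in bB.
have tB := all_take_ c AllB.
rewrite /I !F_iota /SA ?F_mapS //.
- have := F_bnd (p := (nth 0 B c).+1) tB; lia.
- have := F_bnd (p := nth 0 B c) tB; lia.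
Qed.

Lemma nodeL_X c : c < n -> nodeL je (size A + c) = 1.
Proof.
move=> cn; rewrite nodeLE /je -sSA (take_cat_add SA) (nth_cat_add SA) take_cat sI cn nth_cat sI cn.
rewrite /I nth_iota // take_iota (_ : minn c n = c); last lia.
rewrite foldr_cat (F_iota_top 1 c) /SA.
apply: F_fix; rewrite all_map; apply/allP => x xA; have := allP AllA x xA; rewrite /=; lia.
Qed.

Lemma nodeR_bnd x : x < size je -> 0 < nodeR je x <= n.+1.
Proof.
move=> xs; rewrite nodeRE; apply: F_bnd; first exact: all_take_ Allje'.
have := nth_all Allje' xs; rewrite /=; lia.
Qed.

Lemma sje' : size je = size A + n + size B.
Proof. by rewrite /je !size_cat sI sSA addnA. Qed.

Lemma A_sim : exists f : GP n ji -> GP n.+1 je, injective f /\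
  forall Q : GP n.+1 je, (exists P, f P = Q) <-> ~~ switches_on je 1 (val Q).
Proof.
have onE : forall t w, t < size ji -> on_node je (phiC n (size A) t) w.+1 = on_node ji t w.
  by move=> t w /Anodes [L R']; rewrite /on_node L R' !eqSS.
apply: (@sim_main ji je n n.+1 1 (XC n (size A)) (phiC n (size A)) (phiinvC n (size A)) S predn).
- exact: phiC_mono.
- exact: phiCK.
- exact: phiinvC_inj.
- by [].
- by [].
- by [].
- by move=> x; rewrite /=; lia.
- move=> t ht; rewrite /ji nodeLE nodeRE.
  have Aij : all (fun x => 0 < x < n) (A ++ B) by rewrite all_cat AllA AllB.
  have := nth_all Aij ht => /= hb.
  have := F_bnd (p := nth 0 (A ++ B) t) (all_take_ t Aij).
  have := F_bnd (p := (nth 0 (A ++ B) t).+1) (all_take_ t Aij).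
  move=> h1 h2; rewrite h1 ?h2 //; lia.
- exact: phiCX.
- exact: Anodes.
- move=> w; apply: (Hwn_gen (psi := S)) => //.
  + by rewrite /ji size_cat.
  + exact: sje'.
- by rewrite /phiC /ji size_cat sje' ifF; lia.
- move=> x /andP [h1 h2] _; have [c ec] : exists c, x = size A + c by exists (x - size A); lia.
  subst x; by rewrite /on_node nodeL_X ?eqxx //; lia.
- move=> k x a' hk /andP [h1 h2] xs on ne.
  have [c ec] : exists c, x = size A + c by exists (x - size A); lia.
  have hL : nodeL je x = 1 by rewrite ec nodeL_X //; lia.
  have hR : a' = nodeR je x.
    by move: on; rewrite /on_node hL (negbTE ne) /= => /eqP.
  have oth : other je x a' = 1 by rewrite /other hL (negbTE ne).
  have := nodeR_bnd xs; rewrite -hR => hb.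
  rewrite /straight_ok oth /upward /=; move: hk; lia.
- move=> k' /andP [h1 h2] ne1 ne2; exists k'.-1; [apply/andP; split|]; move: ne1; rewrite /=; lia.
- by move=> k /andP [h1 h2]; apply/andP; split => //; lia.
Qed.

End ACase.

Theorem mainTheorem10 (n : nat) (i : seq nat) (s : nat) (b : bullet) :
  2 <= n -> Sigma n i -> s <= (n * n.-1) %/ 2 ->
  exists f : GP n i -> GP n.+1 (ext b n s i),
    injective f /\
    forall Q : GP n.+1 (ext b n s i),
      (exists P : GP n i, f P = Q) <-> ~~ switches_on (ext b n s i) (ell b n) (val Q).
Proof.
move=> _ /and3P [_ Hall _] _.
have AllA : all (fun x => 0 < x < n) (take (size i - s) i) by exact: all_take_.
have AllB : all (fun x => 0 < x < n) (drop (size i - s) i) by apply: all_sub Hall _ => x /mem_drop.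
case: b.
- by move: (D_sim AllA AllB); rewrite cat_take_drop.
- by move: (A_sim AllA AllB); rewrite cat_take_drop.
Qed.
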